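(* Let $G$ be a graph of order at least $3$ and maximum degree at most $3$. If $S\subseteq V(G)$ is such that $w_{(G,S)}(u)\geq 3$ for every $u\in V(G)\setminus S$, then $|S|\geq\frac{1}{4}(n(G)+6)$.
   Context: All graphs are finite, simple and undirected; $n(G)=|V(G)|$. For a graph $G$, a set $S\subseteq V(G)$, and vertices $u,v$ with $u\in S$ or $v\in S$, ${\rm dist}_{(G,S)}(u,v)$ is the minimum number of edges of a path $P$ in $G$ between $u$ and $v$ such that $S$ contains exactly one endvertex of $P$ and no internal vertex of $P$, and $\infty$ if no such path exists (so ${\rm dist}_{(G,S)}(u,u)=0$ for $u\in S$, and $\infty$ for distinct $u,v\in S$). For $u\in V(G)$, $w_{(G,S)}(u)=\sum_{v\in S}(1/2)^{{\rm dist}_{(G,S)}(u,v)-1}$ with $(1/2)^{\infty}=0$. *)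

(* Defs.v *)
From HB Require Import structures.
From mathcomp Require Import all_boot all_order all_algebra.
Set Implicit Arguments. Unset Strict Implicit. Unset Printing Implicit Defensive.
Import Order.TTheory GRing.Theory Num.Theory.

Definition simple_graph (T : finType) (e : rel T) : Prop :=
  symmetric e /\ irreflexive e.

Definition max_deg_le (T : finType) (e : rel T) (d : nat) : Prop :=
  forall x : T, #|[set y | e x y]| <= d.

(* The path with vertex sequence u :: p (from u to last u p) is an
   (S)-admissible path: a path in G (consecutive vertices adjacent, no
   repeated vertices) such that S contains exactly one endvertex and no
   internal vertex. For p = [::] the path is the trivial path at u, whose
   only endvertex is u. *)
Definition adm_path (T : finType) (e : rel T) (S : {set T}) (u : T) (p : seq T) : bool :=
  [&& path e u p, uniq (u :: p) &
      if p is [::] then u \in S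
      else ((u \in S) != (last u p \in S)) &&
           all (fun x => x \notin S) (behead (belast u p))].

Definition adm_len (T : finType) (e : rel T) (S : {set T}) (u v : T) (k : nat) : bool :=
  [exists p : k.-tuple T, adm_path e S u p && (last u p == v)].

(* dist_(G,S)(u,v) < infinity. Admissible paths have no repeated vertex,
   hence fewer than #|T| edges. *)
Definition dist_fin (T : finType) (e : rel T) (S : {set T}) (u v : T) : bool :=
  has (adm_len e S u v) (iota 0 #|T|).

Definition distGS (T : finType) (e : rel T) (S : {set T}) (u v : T) : nat :=
  find (adm_len e S u v) (iota 0 #|T|).

Definition weight (T : finType) (e : rel T) (S : {set T}) (u : T) : rat :=
  (\sum_(v in S)
     (if dist_fin e S u v then (2%:Q)^-1 ^ ((distGS e S u v)%:Z - 1) else 0))%R.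

(* Main.v *)
Require Import Defs.
From HB Require Import structures.
From mathcomp Require Import all_boot all_order all_algebra.
From mathcomp Require Import zify ring lra.
Import Order.TTheory GRing.Theory Num.Theory.

Set Implicit Arguments. Unset Strict Implicit. Unset Printing Implicit Defensive.


Definition stp0 (T : finType) (e : rel T) (S : {set T}) (X : {set T}) : {set T} :=
  X :|: [set y | (y \notin S) && [exists x in X, e x y]].
Fact stp_key : unit. Proof. by []. Qed.
Definition stp := locked_with stp_key stp0.
Lemma in_stp (T : finType) (e : rel T) (S X : {set T}) y :
  (y \in stp e S X) = (y \in X) || ((y \notin S) && [exists x in X, e x y]).
Proof. by rewrite [stp]unlock /stp0 !inE. Qed.
Definition Rk (T : finType) (e : rel T) (S : {set T}) (u : T) (k : nat) : {set T} :=
  iter k (stp e S) [set u].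
Definition Nk (T : finType) (e : rel T) (S : {set T}) (u : T) (k : nat) : {set T} :=
  [set v in S | [exists x in Rk e S u k, e x v]].
Definition Np (T : finType) (e : rel T) (S : {set T}) (u : T) (k : nat) : {set T} :=
  if k is k'.+1 then Nk e S u k' else set0.

Lemma stp_ext (T : finType) (e : rel T) (S X : {set T}) : X \subset stp e S X.
Proof. by apply/subsetP=> y yX; rewrite in_stp yX. Qed.

Lemma stp_mono (T : finType) (e : rel T) (S X Y : {set T}) :
  X \subset Y -> stp e S X \subset stp e S Y.
Proof.
move=> XY; apply/subsetP=> y; rewrite !in_stp => /orP[yX|/andP[yS /existsP[x /andP[xX exy]]]].
  by rewrite (subsetP XY).
apply/orP; right; rewrite yS /=; apply/existsP; exists x; by rewrite (subsetP XY).
Qed.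

Lemma Rk_sub (T : finType) (e : rel T) (S : {set T}) u k l :
  k <= l -> Rk e S u k \subset Rk e S u l.
Proof.
move/subnK=> <-; elim: (l - k) => [|d IH]; first by rewrite add0n subxx.
apply: subset_trans IH _; rewrite addSn; exact: stp_ext.
Qed.

Lemma Rk_notS (T : finType) (e : rel T) (S : {set T}) u k :
  u \notin S -> Rk e S u k \subset ~: S.
Proof.
move=> uS; elim: k => [|k IH] /=.
  by apply/subsetP=> x; rewrite !inE => /eqP->.
apply/subsetP=> y; rewrite in_stp => /orP[/(subsetP IH)//|].
by rewrite !inE => /andP[].
Qed.

Lemma Nk_sub (T : finType) (e : rel T) (S : {set T}) u k l :
  k <= l -> Nk e S u k \subset Nk e S u l.
Proof.
move=> kl; apply/subsetP=> v; rewrite !inE => /andP[-> /existsP[x /andP[xR exv]]].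
apply/existsP; exists x; by rewrite exv (subsetP (Rk_sub e S u kl)).
Qed.

Lemma Np_sub (T : finType) (e : rel T) (S : {set T}) u k :
  Np e S u k \subset Nk e S u k.
Proof. case: k => [|k] /=; [exact: sub0set | exact: Nk_sub]. Qed.

Lemma cover_count (T : finType) (e : rel T) (A L : {set T}) :
  (forall y, y \in A -> exists2 x, x \in L & e x y) ->
  #|A| <= \sum_(x in L) #|[set y in A | e x y]|.
Proof.
move=> H.
rewrite -sum1_card.
apply: leq_trans (_ : \sum_(y in A) \sum_(x in L) (e x y : nat) <= _).
  apply: leq_sum => y yA; have [x xL exy] := H y yA.
  by rewrite (bigD1 x) //= exy.
rewrite exchange_big /=; apply: leq_sum => x _.
rewrite -sum1_card big_mkcond /= [X in _ <= X]big_mkcond /=.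
apply: leq_sum => y _; rewrite inE; by case: (y \in A); case: (e x y).
Qed.

Unset Implicit Arguments. Set Strict Implicit.

Set Implicit Arguments. Unset Strict Implicit. Unset Printing Implicit Defensive.


Lemma card_diff_add (T : finType) (X Y : {set T}) :
  Y \subset X -> #|X :\: Y| + #|Y| = #|X|.
Proof. by move=> YX; rewrite (cardsDS YX) subnK // subset_leq_card. Qed.

Lemma cover_count_const (T : finType) (e : rel T) (A L : {set T}) d :
  (forall y, y \in A -> exists2 x, x \in L & e x y) ->
  (forall x, x \in L -> #|[set y in A | e x y]| <= d) ->
  #|A| <= #|L| * d.
Proof.
move=> H1 H2; apply: leq_trans (cover_count H1) _.
rewrite -sum1_card big_distrl /=; apply: leq_sum => x xL; rewrite mul1n; exact: H2.
Qed.

Lemma step_ineq (T : finType) (e : rel T) (S : {set T}) u k :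
  symmetric e -> max_deg_le e 3 -> u \notin S ->
  #|Rk e S u k.+2| + #|Nk e S u k.+1| + 2 * #|Rk e S u k| <=
  3 * #|Rk e S u k.+1| + #|Nk e S u k|.
Proof.
move=> esym deg uS.
set R0 := Rk e S u k; set R1 := Rk e S u k.+1; set R2 := Rk e S u k.+2.
set N0 := Nk e S u k; set N1 := Nk e S u k.+1.
have s01 : R0 \subset R1 by apply: Rk_sub.
have s12 : R1 \subset R2 by apply: Rk_sub.
have n01 : N0 \subset N1 by apply: Nk_sub.
have R1S : R1 \subset ~: S by apply: Rk_notS.
have R2S : R2 \subset ~: S by apply: Rk_notS.
pose A := (R2 :\: R1) :|: (N1 :\: N0).
pose L := R1 :\: R0.
have cardA : #|A| = #|R2 :\: R1| + #|N1 :\: N0|.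
  rewrite -[RHS]cardsUI.
  suff -> : (R2 :\: R1) :&: (N1 :\: N0) = set0 by rewrite cards0 addn0.
  apply/setP=> y; rewrite !inE.
  apply/negP=> /andP[/andP[_ yR2] /andP[_ /andP[yS _]]].
  by move: (subsetP R2S y yR2); rewrite inE yS.
have : #|A| <= #|L| * 2.
  apply: (@cover_count_const T e).
    move=> y; rewrite !inE => /orP[/andP[yR1 yR2]|/andP[yN0 /andP[yS /existsP[x /andP[xR1 exy]]]]].
      move: yR2; rewrite /R2 /= in_stp -/(Rk e S u k.+1) -/R1 (negbTE yR1) /=.
      move=> /andP[yS /existsP[x /andP[xR1 exy]]].
      exists x => //; rewrite inE xR1 andbT.
      apply/negP=> xR0; move: yR1; rewrite /R1 /= in_stp -/(Rk e S u k) -/R0.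
      by rewrite yS /=; apply/negP/negPn/orP; right; apply/existsP; exists x; rewrite xR0.
    exists x => //; rewrite inE xR1 andbT.
    apply/negP=> xR0; move: yN0; rewrite yS /=.
    by apply/negP/negPn/existsP; exists x; rewrite xR0.
  move=> x; rewrite inE => /andP[xR0 xR1].
  move: (xR1); rewrite /R1 /= in_stp -/(Rk e S u k) -/R0 (negbTE xR0) /=.
  move=> /andP[xS /existsP[p /andP[pR0 epx]]].
  have sub : [set y in A | e x y] \subset [set y | e x y] :\ p.
    have pA : p \notin A.
      have pR1 := subsetP s01 p pR0.
      rewrite /A !in_setU !in_setD pR1 /=.
      apply/negP=> /andP[_]; rewrite /N1 /Nk in_set => /andP[pS _].
      by move: (subsetP R1S p pR1); rewrite in_setC pS.
    apply/subsetP=> y; rewrite in_set => /andP[yA exy].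
    rewrite in_setD1 in_set exy andbT.
    by apply/negP=> /eqP Eyp; subst y; rewrite yA in pA.
  apply: leq_trans (subset_leq_card sub) _.
  have := deg x; rewrite (cardsD1 p) inE esym epx add1n ltnS; exact.
rewrite cardA /L.
rewrite -(card_diff_add s12) -(card_diff_add n01) -(card_diff_add s01).
move: #|R2 :\: R1| #|N1 :\: N0| #|R1 :\: R0| #|R1| #|R0| #|N0| => a b c d f g.
move=> H; lia.
Qed.

Unset Implicit Arguments. Set Strict Implicit.

Set Implicit Arguments. Unset Strict Implicit. Unset Printing Implicit Defensive.


Lemma step0_ineq (T : finType) (e : rel T) (S : {set T}) u :
  max_deg_le e 3 -> u \notin S ->
  #|Rk e S u 1| + #|Nk e S u 0| <= 4.
Proof.
move=> deg uS.
set R0 := Rk e S u 0; set R1 := Rk e S u 1; set N0 := Nk e S u 0.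
have s01 : R0 \subset R1 by apply: Rk_sub.
have R1S : R1 \subset ~: S by apply: Rk_notS.
have cR0 : #|R0| = 1 by rewrite /R0 /= cards1.
pose A := (R1 :\: R0) :|: N0.
have cardA : #|A| = #|R1 :\: R0| + #|N0|.
  rewrite -[RHS]cardsUI.
  suff -> : (R1 :\: R0) :&: N0 = set0 by rewrite cards0 addn0.
  apply/setP=> y; rewrite in_setI in_setD in_set0.
  apply/negP=> /andP[/andP[_ yR1]]; rewrite /N0 /Nk in_set => /andP[yS _].
  by move: (subsetP R1S y yR1); rewrite in_setC yS.
have : #|A| <= #|R0| * 3.
  apply: (@cover_count_const T e).
    move=> y; rewrite in_setU in_setD => /orP[/andP[yR0 yR1]|].
      move: yR1; rewrite /R1 /= in_stp -/R0 (negbTE yR0) /=.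
      by move=> /andP[yS /existsP[x /andP[xR0 exy]]]; exists x.
    rewrite /N0 /Nk in_set => /andP[yS /existsP[x /andP[xR0 exy]]]; by exists x.
  move=> x; rewrite /R0 /= in_set1 => /eqP->.
  apply: leq_trans (deg u); apply: subset_leq_card; apply/subsetP=> y.
  by rewrite !in_set => /andP[_ ->].
rewrite cardA cR0 -(card_diff_add s01) cR0.
move: #|R1 :\: R0| #|N0| => a b H; lia.
Qed.

Lemma RkS (T : finType) (e : rel T) (S : {set T}) u k :
  Rk e S u k.+1 = stp e S (Rk e S u k).
Proof. by []. Qed.

Lemma Rk_grow (T : finType) (e : rel T) (S : {set T}) u k :
  k < #|Rk e S u k| \/ Rk e S u k.+1 = Rk e S u k.
Proof.
elim: k => [|k [IH|IH]].
- by left; rewrite /= cards1.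
- have [E|NE] := eqVneq (Rk e S u k.+1) (Rk e S u k).
    by right; rewrite (RkS e S u k.+1) E.
  left; apply: leq_ltn_trans IH _.
  have sub : Rk e S u k \subset Rk e S u k.+1 by apply: Rk_sub.
  have : Rk e S u k \proper Rk e S u k.+1 by rewrite properEneq eq_sym NE sub.
  by move/proper_card.
- by right; rewrite (RkS e S u k.+1) IH.
Qed.

Unset Implicit Arguments. Set Strict Implicit.

Set Implicit Arguments. Unset Strict Implicit. Unset Printing Implicit Defensive.


Lemma Rk_stable (T : finType) (e : rel T) (S : {set T}) u :
  Rk e S u #|T|.+1 = Rk e S u #|T|.
Proof.
case: (Rk_grow e S u #|T|) => // H.
by move: (max_card (mem (Rk e S u #|T|))); rewrite leqNgt H.
Qed.

Lemma path_Rk (T : finType) (e : rel T) (S : {set T}) u p : forall x k,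
  x \in Rk e S u k -> path e x p -> all (fun y => y \notin S) p ->
  last x p \in Rk e S u (k + size p).
Proof.
elim: p => [|y p IH] x k xR /=; first by rewrite addn0.
move=> /andP[exy pp] /andP[yS ap].
rewrite addnS -addSn; apply: IH => //.
rewrite RkS in_stp yS /=; apply/orP; right; apply/existsP; exists x; by rewrite xR.
Qed.

Lemma adm_N (T : finType) (e : rel T) (S : {set T}) u v d :
  u \notin S -> v \in S -> adm_len e S u v d ->
  0 < d /\ v \in Nk e S u d.-1.
Proof.
move=> uS vS /existsP[p /andP[adm /eqP lv]].
have sz : size p = d by rewrite size_tuple.
move: adm lv sz; case: (tval p) => [|y s]; first by rewrite /adm_path /= (negbTE uS).
move=> adm lv sz.
move: adm lv; rewrite /adm_path.
case/lastP E: (y :: s) => [//|q z] /andP[pth /andP[_ /andP[_ allq]]] lv.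
have szq : size q = d.-1 by rewrite -sz -[size (y :: s)]/(size (y :: s)) E size_rcons.
split; first by rewrite -sz.
move: pth allq lv; rewrite belast_rcons /= rcons_path last_rcons => /andP[pq elz] allq lv.
have u0 : u \in Rk e S u 0 by rewrite /= in_set1.
have := @path_Rk T e S u q u 0 u0 pq allq; rewrite add0n szq => lR.
rewrite /Nk in_set vS /=; apply/existsP; exists (last u q); by rewrite lR -lv elz.
Qed.

Definition Dk (T : finType) (e : rel T) (S : {set T}) u k := Nk e S u k :\: Np e S u k.

Lemma exists_D (T : finType) (e : rel T) (S : {set T}) u v j :
  v \in Nk e S u j -> exists2 k, k <= j & v \in Dk e S u k.
Proof.
elim: j => [|j IH] vN.
  by exists 0 => //; rewrite /Dk /Np in_setD in_set0.
case vj: (v \in Nk e S u j).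
  by have [k kj vk] := IH vj; exists k => //; rewrite (leq_trans kj).
by exists j.+1 => //; rewrite /Dk /Np in_setD vj.
Qed.

Open Scope ring_scope.

Definition Wt (T : finType) (e : rel T) (S : {set T}) u K : rat :=
  \sum_(k < K.+1) \sum_(v in S) (if v \in Dk e S u k then (2%:Q)^-1 ^+ k else 0).

Lemma weight_le (T : finType) (e : rel T) (S : {set T}) u :
  u \notin S -> weight e S u <= Wt e S u #|T|.
Proof.
move=> uS.
rewrite /weight /Wt exchange_big /=; apply: ler_sum => v vS.
case: ifP => [df|_]; last first.
  by apply: sumr_ge0 => k _; case: ifP => // _; apply: exprn_ge0.
set d := distGS e S u v.
have dlt : (d < #|T|)%N.
  by rewrite /d /distGS -[X in (_ < X)%N](size_iota 0 #|T|) -has_find.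
have ad : adm_len e S u v d.
  by have := nth_find 0 df; rewrite nth_iota // add0n.
have [dpos vN] := adm_N uS vS ad.
have [k kle vD] := exists_D vN.
have kK : (k < #|T|.+1)%N.
  by apply: leq_ltn_trans kle _; apply: leq_trans (leq_pred d) _; apply: ltnW; rewrite (leq_trans dlt).
rewrite (bigD1 (Ordinal kK)) //= vD.
have -> : (d%:Z - 1 = (d.-1)%:Z)%R by rewrite -{1}(prednK dpos) intS addrAC subrr add0r.
rewrite -exprnP -[X in X <= _]addr0; apply: lerD.
  by apply: ler_wiXn2l.
by apply: sumr_ge0 => i _; case: ifP => // _; apply: exprn_ge0.
Qed.


Close Scope ring_scope.

Unset Implicit Arguments. Set Strict Implicit.

Set Implicit Arguments. Unset Strict Implicit. Unset Printing Implicit Defensive.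

Open Scope ring_scope.

Lemma inner_sum (T : finType) (S Dd : {set T}) (c : rat) :
  Dd \subset S ->
  \sum_(v in S) (if v \in Dd then c else 0) = c *+ #|Dd|.
Proof.
move=> DS; rewrite -big_mkcondr /= -sumr_const; apply: eq_bigl => v.
by rewrite andb_idl // => vD; exact: (subsetP DS).
Qed.

Lemma card_Dk (T : finType) (e : rel T) (S : {set T}) u k :
  (#|Dk e S u k|%:R = #|Nk e S u k|%:R - #|Np e S u k|%:R :> rat).
Proof.
by rewrite -(card_diff_add (Np_sub e S u k)) natrD addrK.
Qed.

Lemma Dk_sub (T : finType) (e : rel T) (S : {set T}) u k : Dk e S u k \subset S.
Proof. by apply/subsetP=> v; rewrite /Dk /Nk !inE => /andP[_ /andP[]]. Qed.

Lemma WtS (T : finType) (e : rel T) (S : {set T}) u K :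
  Wt e S u K.+1 = Wt e S u K +
    (#|Nk e S u K.+1|%:R - #|Nk e S u K|%:R) * (2%:Q)^-1 ^+ K.+1.
Proof.
rewrite /Wt big_ord_recr /= inner_sum ?Dk_sub //; congr (_ + _).
by rewrite -(mulr_natr (_ ^+ _)) card_Dk /= mulrC.
Qed.

Lemma Wt0 (T : finType) (e : rel T) (S : {set T}) u :
  Wt e S u 0 = #|Nk e S u 0|%:R.
Proof.
rewrite /Wt big_ord1 inner_sum ?Dk_sub //.
by rewrite expr0 -(mulr_natr 1) card_Dk /= cards0 subr0 mul1r.
Qed.

Lemma potential (T : finType) (e : rel T) (S : {set T}) u K :
  symmetric e -> max_deg_le e 3 -> u \notin S ->
  let r k := (#|Rk e S u k|%:R : rat) in
  let n k := (#|Nk e S u k|%:R : rat) in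
  0 <= 2 + 2 * r K - r K.+1 - n K /\
  (2 + 2 * r K - r K.+1 - n K) * (2%:Q)^-1 ^+ K <=
     3 - Wt e S u K - (r K.+1 - r K) * (2%:Q)^-1 ^+ K.
Proof.
move=> esym deg uS r n.
elim: K => [|K [IH1 IH2]].
  have := step0_ineq deg uS; rewrite -(ler_nat rat) natrD => H.
  have r0 : r 0 = 1 by rewrite /r /= cards1.
  rewrite Wt0 expr0 !mulr1 r0 -/(n 0) -/(r 1); split; lra.
have := @step_ineq T e S u K esym deg uS; rewrite -(ler_nat rat) !natrD => H.
rewrite -/(r K.+2) -/(r K.+1) -/(r K) -/(n K.+1) -/(n K) in H.
rewrite WtS -/(n K.+1) -/(n K).
set x := (2%:Q)^-1 ^+ K.+1.
have h2 : 2 * (2%:Q)^-1 = 1 by [].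
have hx : (2%:Q)^-1 ^+ K = 2 * x.
  have h2' : 2 * (2%:Q)^-1 = 1 by [].
  by rewrite /x exprSr mulrCA h2 mulr1.
have xpos : 0 < x by rewrite /x exprn_gt0 // invr_gt0.
rewrite hx in IH2.
split; first lra.
set s := 2 + 2 * r K - r K.+1 - n K in IH1 IH2.
have sx := mulr_ge0 IH1 (ltW xpos).
rewrite -subr_ge0.
have -> : 3 - (Wt e S u K + (n K.+1 - n K) * x) - (r K.+2 - r K.+1) * x -
    (2 + 2 * r K.+1 - r K.+2 - n K.+1) * x =
    (3 - Wt e S u K - (r K.+1 - r K) * (2 * x) - s * (2 * x)) + s * x.
  rewrite /s; ring.
by apply: addr_ge0 => //; rewrite subr_ge0.
Qed.

Lemma core (T : finType) (e : rel T) (S : {set T}) u :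
  symmetric e -> max_deg_le e 3 -> u \notin S ->
  3%:Q <= weight e S u ->
  (#|Rk e S u #|T| | + 2 <= #|Nk e S u #|T| |)%N.
Proof.
move=> esym deg uS w3.
have [_ P] := potential #|T| esym deg uS.
rewrite Rk_stable subrr mul0r subr0 in P.
have W3 := le_trans w3 (weight_le e uS).
have hpos : 0 < (2%:Q)^-1 ^+ #|T| by rewrite exprn_gt0 // invr_gt0.
have : (2 + 2 * #|Rk e S u #|T| |%:R - #|Rk e S u #|T| |%:R - #|Nk e S u #|T| |%:R) <= 0 :> rat.
  rewrite -(pmulr_lle0 _ hpos).
  apply: le_trans P _; rewrite subr_le0 //.
rewrite -(ler_nat rat) natrD.
move: (#|Rk e S u #|T| |%:R : rat) (#|Nk e S u #|T| |%:R : rat) => a b; lra.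
Qed.


Close Scope ring_scope.

Unset Implicit Arguments. Set Strict Implicit.

Set Implicit Arguments. Unset Strict Implicit. Unset Printing Implicit Defensive.


Definition Cx (T : finType) (e : rel T) (S : {set T}) x := Rk e S x #|T|.
Definition eU (T : finType) (e : rel T) (S : {set T}) : rel T :=
  [rel a b | [&& a \notin S, b \notin S & e a b]].

Lemma Cx_self (T : finType) (e : rel T) (S : {set T}) x : x \in Cx e S x.
Proof.
have : x \in Rk e S x 0 by rewrite /= in_set1.
by apply/subsetP/Rk_sub.
Qed.

Lemma closed_path (T : finType) (r : rel T) (X : {set T}) p :
  (forall a b, a \in X -> r a b -> b \in X) ->
  forall z, z \in X -> path r z p -> last z p \in X.
Proof.
move=> cl; elim: p => [|y p IH] z zX //= /andP[rzy pp].
by apply: IH => //; apply: cl rzy.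
Qed.

Lemma Cx_conn (T : finType) (e : rel T) (S : {set T}) x :
  x \notin S -> Cx e S x = [set y | connect (eU e S) x y].
Proof.
move=> xS; apply/setP=> y; rewrite in_set; apply/idP/idP.
  have : forall k, Rk e S x k \subset [set y | connect (eU e S) x y].
    elim=> [|k IH].
      by apply/subsetP=> z; rewrite /= in_set1 in_set => /eqP->; apply: connect0.
    apply/subsetP=> z; rewrite RkS in_stp => /orP[/(subsetP IH)//|].
    move=> /andP[zS /existsP[w /andP[wR ewz]]].
    have wS : w \notin S by move: (subsetP (@Rk_notS T e S x k xS) w wR); rewrite in_setC.
    rewrite in_set; apply: connect_trans (_ : connect (eU e S) w z).
      by move: (subsetP IH w wR); rewrite in_set.
    by apply: connect1; rewrite /eU /= wS zS ewz.
  by move=> H /(subsetP (H #|T|)); rewrite in_set.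
move=> /connectP[p pp ->].
have cl : forall a b, a \in Cx e S x -> eU e S a b -> b \in Cx e S x.
  move=> a b aC /andP[_ /andP[bS eab]].
  rewrite /Cx -Rk_stable RkS in_stp bS /=; apply/orP; right.
  by apply/existsP; exists a; rewrite aC.
by apply: (closed_path cl (Cx_self e S x)).
Qed.

Lemma eU_sym (T : finType) (e : rel T) (S : {set T}) :
  symmetric e -> symmetric (eU e S).
Proof. by move=> esym a b; rewrite /eU /= esym andbCA. Qed.

Lemma Cx_sym (T : finType) (e : rel T) (S : {set T}) x y :
  symmetric e -> x \notin S -> y \notin S -> (y \in Cx e S x) = (x \in Cx e S y).
Proof.
move=> esym xS yS; rewrite !Cx_conn // !in_set.
by rewrite (sym_connect_sym (eU_sym S esym)).
Qed.

Lemma Cx_eq (T : finType) (e : rel T) (S : {set T}) x y :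
  symmetric e -> x \notin S -> y \notin S -> y \in Cx e S x -> Cx e S y = Cx e S x.
Proof.
move=> esym xS yS; rewrite !Cx_conn // in_set => cxy.
have cs := sym_connect_sym (eU_sym S esym).
apply/setP=> z; rewrite !in_set; apply/idP/idP => H.
  exact: connect_trans cxy H.
by apply: connect_trans H; rewrite cs.
Qed.

Lemma Cx_notS (T : finType) (e : rel T) (S : {set T}) x :
  x \notin S -> Cx e S x \subset ~: S.
Proof. exact: Rk_notS. Qed.

Lemma card_sep (T : finType) (A : {set T}) (P : pred T) :
  #|[set v in A | P v]| = \sum_(v in A) (P v : nat).
Proof.
rewrite -sum1_card big_mkcond /= [RHS]big_mkcond /=; apply: eq_bigr => v _.
by rewrite in_set; case: (v \in A); case: (P v).
Qed.

Lemma G5 (T : finType) (e : rel T) (S : {set T}) x :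
  (#|Nk e S x #|T| | <= \sum_(y in Cx e S x) #|[set v in S | e y v]|)%N.
Proof.
apply: leq_trans (@cover_count T e (Nk e S x #|T|) (Cx e S x) _) _.
  by move=> v; rewrite /Nk in_set => /andP[_ /existsP[w /andP[wR ewv]]]; exists w.
apply: leq_sum => y _; apply: subset_leq_card; apply/subsetP=> v.
by rewrite !in_set => /andP[/andP[-> _] ->].
Qed.

Lemma G6 (T : finType) (e : rel T) (S : {set T}) :
  symmetric e -> max_deg_le e 3 ->
  (\sum_(y in ~: S) #|[set v in S | e y v]| <= #|S| * 3)%N.
Proof.
move=> esym deg.
under eq_bigr do rewrite card_sep.
rewrite exchange_big /= -sum1_card big_distrl /=; apply: leq_sum => v _.
rewrite mul1n; apply: leq_trans (deg v).
rewrite -sum1_card [X in (_ <= X)%N]big_mkcond /= big_mkcond /=.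
by apply: leq_sum => y _; rewrite in_set esym; case: (y \in ~: S); case: (e v y).
Qed.

Unset Implicit Arguments. Set Strict Implicit.

Set Implicit Arguments. Unset Strict Implicit. Unset Printing Implicit Defensive.

Open Scope ring_scope.

Lemma Cx_card_neq0 (T : finType) (e : rel T) (S : {set T}) x :
  (#|Cx e S x|%:R : rat) != 0.
Proof. by rewrite pnatr_eq0 -lt0n card_gt0; apply/set0Pn; exists x; apply: Cx_self. Qed.

Lemma exch (T : finType) (e : rel T) (S : {set T}) (hf : T -> rat) :
  symmetric e ->
  \sum_(y in ~: S) hf y = \sum_(x in ~: S) (\sum_(y in Cx e S x) hf y) / #|Cx e S x|%:R.
Proof.
move=> esym.
transitivity (\sum_(y in ~: S) \sum_(x in ~: S)
               (if y \in Cx e S x then hf y / #|Cx e S x|%:R else 0)).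
  apply: eq_bigr => y; rewrite in_setC => yS.
  transitivity (\sum_(x in ~: S) (if x \in Cx e S y then hf y / #|Cx e S y|%:R else 0)).
    rewrite inner_sum ?Cx_notS // -(mulr_natr (_ / _)) divfK //; exact: Cx_card_neq0.
  apply: eq_bigr => x; rewrite in_setC => xS.
  rewrite -(Cx_sym esym xS yS); case: ifP => // H.
  by rewrite (Cx_eq esym xS yS H).
rewrite exchange_big /=; apply: eq_bigr => x; rewrite in_setC => xS.
rewrite mulr_suml -big_mkcondr /=; apply: eq_bigl => y.
apply/andP/idP => [[]//|yC]; split => //.
by have := subsetP (Cx_notS e xS) y yC; rewrite in_setC.
Qed.

Lemma frac_bound (a c t q : rat) :
  c + 2 <= a -> 1 <= c -> c <= t -> 0 <= q -> q * t = 2 -> 1 + q <= a / c.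
Proof.
move=> ha hc ct hq qt.
have cpos : 0 < c by lra.
rewrite ler_pdivlMr //.
have tc : 0 <= t - c by lra.
have := mulr_ge0 hq tc.
nra.
Qed.

Lemma final_arith (s m q : rat) :
  3 <= s -> 0 <= m -> 0 <= q -> q * (s - 2) = 2 -> m * (1 + q) <= s * 3 ->
  (s + m + 6) / 4 <= s.
Proof.
move=> s3 m0 q0 qt H.
have H2 : m * (1 + q) * (s - 2) <= s * 3 * (s - 2).
  by apply: ler_wpM2r => //; lra.
have E : m * (1 + q) * (s - 2) = m * s :> rat.
  have -> : m * (1 + q) * (s - 2) = m * (s - 2) + m * (q * (s - 2)) by ring.
  rewrite qt; ring.
rewrite E in H2.
have : m <= 3 * (s - 2).
  have sp : 0 < s by lra.
  rewrite -(ler_pM2r sp); nra.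
move=> Hm; rewrite ler_pdivrMr //; lra.
Qed.


Close Scope ring_scope.

Unset Implicit Arguments. Set Strict Implicit.

Theorem theorem7 (T : finType) (e : rel T) (S : {set T}) :
  simple_graph e -> 3 <= #|T| -> max_deg_le e 3 ->
  (forall u : T, u \notin S -> (3%:Q <= weight e S u)%R) ->
  ((#|T|%:Q + 6%:Q) / 4%:Q <= #|S|%:Q)%R.
Proof.
move=> [esym _] n3 deg W.
rewrite -!pmulrn.
case: (pickP [pred x | x \notin S]) => [x0 /= x0S | none]; last first.
  have SE : S = setT.
    by apply/setP=> x; move: (none x); rewrite /= in_setT; case: (x \in S).
  rewrite SE cardsT.
  have : (3 <= #|T|%:R :> rat)%R by rewrite ler_nat.
  move: (#|T|%:R : rat) => n h; rewrite ler_pdivrMr //; lra.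
have cT := cardsC S.
have coreS : forall x, x \notin S ->
    (#|Cx e S x| + 2 <= #|S|)%N /\
    (#|Cx e S x| + 2 <= \sum_(y in Cx e S x) #|[set v in S | e y v]|)%N.
  move=> x xS; have c := core esym deg xS (W x xS).
  split.
    apply: leq_trans c _; apply: subset_leq_card; apply/subsetP=> v.
    by rewrite /Nk in_set => /andP[].
  exact: leq_trans c (G5 e S x).
have [c0 _] := coreS x0 x0S.
have c1 : (1 <= #|Cx e S x0|)%N by rewrite card_gt0; apply/set0Pn; exists x0; apply: Cx_self.
set s := #|S| in c0 coreS cT *.
set m := #|~: S| in cT.
have tpos : (1 <= s%:R - 2 :> rat)%R.
  have : (3 <= s)%N by lia.
  rewrite -(ler_nat rat) => h; lra.
set t := (s%:R - 2 : rat)%R in tpos.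
pose q := (2 / t)%R.
have qt : (q * t = 2)%R by rewrite /q divfK // gt_eqF // (lt_le_trans ltr01 tpos).
have q0 : (0 <= q)%R by rewrite /q divr_ge0 //; lra.
pose hf := fun y => (#|[set v in S | e y v]|%:R : rat).
have up : (\sum_(y in ~: S) hf y <= s%:R * 3)%R.
  rewrite /hf -natr_sum -natrM ler_nat; exact: G6.
have low : ((1 + q) *+ m <= \sum_(y in ~: S) hf y)%R.
  rewrite (@exch T e S hf esym) -sumr_const; apply: ler_sum => x; rewrite in_setC => xS.
  have [cs ch] := coreS x xS.
  apply: (frac_bound (t := t)) => //.
  - by rewrite /hf -natr_sum -(natrD _ _ 2) ler_nat.
  - by rewrite ler1n card_gt0; apply/set0Pn; exists x; apply: Cx_self.
  - by rewrite /t lerBrDr -(natrD _ _ 2) ler_nat.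
have := le_trans low up; rewrite -mulr_natr mulrC => H.
have := final_arith (s := s%:R) (m := m%:R) (q := q).
rewrite -cT natrD.
apply => //.
- have : (3 <= s)%N by lia.
  by rewrite -(ler_nat rat).
Qed.
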